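(* Let $D$ be a knot diagram and let $D'$ be the knot diagram obtained from $D$ by increasing the number of full twists in some twist region of $D$. Then $D$ is in straight position if and only if $D'$ is in straight position.
   Context: A knot diagram is in straight position if the knot can be decomposed into two sub-arcs such that each sub-arc never crosses itself (equivalently, there is an arc of the knot that passes through every crossing of the diagram without meeting itself at a crossing). A twist region of a diagram consists of a maximal collection of bigon regions arranged end to end; a single crossing adjacent to no bigons is also a twist region. Increasing the number of full twists of a twist region means adding an even number of alternating crossings to the twist region in such a way that no new crossings can be removed by Reidemeister type 2 moves. *)

(* Defs.v *)
From mathcomp Require Import all_boot.
Set Implicit Arguments. Unset Strict Implicit. Unset Printing Implicit Defensive.

(* A (decorated) 4-valent combinatorial map on a finite set of darts T.
   Each dart is a half-edge leaving a crossing.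
   - dsig : rotation of darts counterclockwise around their crossing,
   - dalp : the edge involution (the dart at the other end of the same edge),
   - dover d : whether the strand through dart d passes OVER at its crossing
               (the strand through d also contains dsig (dsig d)). *)
Record diagram (T : finType) := Diagram {
  dsig : T -> T;
  dalp : T -> T;
  dover : T -> bool }.

Section DiagramDefs.
Variables (T : finType) (D : diagram T).

(* face permutation: orbits are the regions (complementary faces);
   the corner between darts x and dsig x lies in the face of dsig x *)
Definition face (x : T) : T := dsig D (dalp D x).
(* going straight through the next crossing: traversal of the knot *)
Definition strand (x : T) : T := dsig D (dsig D (dalp D x)).
Definition vtx (x : T) : T := froot (dsig D) x.

(* D is a knot diagram: a connected 4-valent map of genus 0 (Euler formula
   V - E + F = 2 with E = 2V), with consistent crossing information, whose
   straight-ahead traversal has one component (two orbits: the two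
   orientations). *)
Definition knot_diagram : Prop :=
  (forall x, iter 4 (dsig D) x = x) /\
  (forall x, dsig D (dsig D x) != x) /\
  (forall x, dalp D (dalp D x) = x) /\
  (forall x, dalp D x != x) /\
  (forall x, dover D (dsig D x) = ~~ dover D x) /\
  (forall x y, connect [rel u v | (v == dsig D u) || (v == dalp D u)] x y) /\
  fcard face predT = (fcard (dsig D) predT + 2)%N /\
  fcard strand predT = 2%N.

(* Straight position: the knot can be cut (at two points interior to edges)
   into two sub-arcs, each passing through pairwise distinct crossings. *)
Definition straight : Prop :=
  exists x0 : T, exists k : nat,
    let n := order strand x0 in
    [/\ (k <= n)%N,
        uniq (map vtx (traject strand x0 k))
      & uniq (map vtx (traject strand (iter k strand x0) (n - k)))].

Definition bigon_corner (x : T) : bool := order face (dsig D x) == 2%N.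

(* The axis of the corner pair {(a, sig a), (sig^2 a, sig^3 a)} at the
   crossing of a is the axis of a twist region containing that crossing:
   one of these two corners is a bigon (the bigons of a twist region sit at
   opposite corners of each of its crossings), or the crossing is adjacent to
   no bigon at all (single-crossing twist region, either axis). *)
Definition twist_axis (a : T) : Prop :=
  bigon_corner a \/ bigon_corner (dsig D (dsig D a)) \/
  (forall x, fconnect (dsig D) a x -> ~~ bigon_corner x).

End DiagramDefs.

(* ---- Adding n = 2m crossings (m full twists) at the corner (a, dsig a). ----
   New crossings x_0,...,x_{n-1} are placed in a row next to the crossing c
   of a, the two edges leaving c through a and b := dsig a being twisted
   around each other.  Darts of a new crossing j : (j,0) up-right (toward c),
   (j,1) up-left, (j,2) down-left, (j,3) down-right (counterclockwise).
   Crossing information is chosen alternating along both strands (starting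
   from c), i.e. the twist region is continued with the same handedness. *)
Section Twist.
Variables (T : finType) (D : diagram T) (a : T) (m : nat).

Local Notation n := (m.*2).
Local Notation T' := (T + 'I_n * 'I_4)%type.
Local Notation b := (dsig D a).

Definition tw_first : option 'I_n := insub 0%N.
Definition tw_last : option 'I_n := insub n.-1.
Definition tw_next (j : 'I_n) : option 'I_n := insub (j.+1).
Definition tw_prev (j : 'I_n) : option 'I_n :=
  if (j : nat) == 0%N then None else insub (j.-1).

Definition q (k : nat) : 'I_4 := inord k.

Definition tw_sig (x : T') : T' :=
  match x with
  | inl y => inl (dsig D y)
  | inr (j, k) => inr (j, ordS k)
  end.

Definition tw_alp (x : T') : T' :=
  match x with
  | inl y =>
      if y == a then
        (if tw_first is Some j0 then inr (j0, q 0) else inl (dalp D y))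
      else if y == b then
        (if tw_first is Some j0 then inr (j0, q 3) else inl (dalp D y))
      else if dalp D y == a then
        (if tw_last is Some jl then inr (jl, q 1) else inl (dalp D y))
      else if dalp D y == b then
        (if tw_last is Some jl then inr (jl, q 2) else inl (dalp D y))
      else inl (dalp D y)
  | inr (j, k) =>
      match nat_of_ord k with
      | 0 => if tw_prev j is Some p then inr (p, q 1) else inl a
      | 1 => if tw_next j is Some p then inr (p, q 0)
             else if dalp D a == b then inr (j, q 2) else inl (dalp D a)
      | 2 => if tw_next j is Some p then inr (p, q 3)
             else if dalp D b == a then inr (j, q 1) else inl (dalp D b)
      | _ => if tw_prev j is Some p then inr (p, q 2) else inl b
      end
  end.

Definition tw_over (x : T') : bool :=
  match x with
  | inl y => dover D y
  | inr (j, k) => if odd k then dover D a else ~~ dover D a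
  end.

Definition twist : diagram T' := Diagram tw_sig tw_alp tw_over.

End Twist.

(* No new crossing of D' can be removed by a Reidemeister II move: every
   bigon region with two distinct vertices, one of which is a new crossing,
   is alternating (its bounding strands are not over at both ends). *)
Definition no_new_R2 (T : finType) (k : nat) (D' : diagram (T + 'I_k * 'I_4)%type)
  : Prop :=
  forall y, (if y is inr _ then true else false) ->
    order (face D') y == 2%N ->
    vtx D' y != vtx D' (dalp D' y) ->
    dover D' y != dover D' (dalp D' y).

(* Main.v *)
Require Import Defs.
From mathcomp Require Import all_boot zify.
Set Implicit Arguments. Unset Strict Implicit. Unset Printing Implicit Defensive.

Section Gen.
Variables (T : finType) (f : T -> T).

Lemma noper x p : 0 < p < order f x -> iter p f x != x.
Proof.
case/andP=> p0 po; apply/negP=> /eqP E.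
have U := orbit_uniq f x.
have := nth_uniq x (i:=0) (j:=p) _ _ U.
rewrite size_orbit order_gt0 po => /(_ isT isT).
rewrite /orbit !nth_traject ?order_gt0 //= E eqxx.
by case: p p0 {po E}.
Qed.

Lemma per_order x d : 0 < d -> iter d f x = x ->
  iter (order f x) f x = x /\ order f x <= d.
Proof.
move=> d0 Ed.
have od : order f x <= d.
  rewrite leqNgt; apply/negP=> dlt.
  by move: (noper (p:=d) (x:=x)); rewrite d0 dlt Ed eqxx => /(_ isT).
split=> //.
have := looping_order f x; rewrite /looping => /trajectP [i io Ei].
case: i io Ei => [//|i] io Ei.
exfalso.
have : iter (order f x - i.+1) f x = x.
  have E1 : iter (order f x - i.+1) f x = iter (order f x - i.+1) f (iter d f x) by rewrite Ed.
  rewrite E1 -iterD.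
  have -> : order f x - i.+1 + d = (d - i.+1) + order f x by lia.
  by rewrite iterD Ei -iterD subnK ?Ed //; lia.
apply/eqP; apply: noper; apply/andP; split; lia.
Qed.

Lemma order_count (P : pred T) x d : 0 < d -> iter d f x = x ->
  count P (traject f x d) = count P (orbit f x) -> 0 < count P (orbit f x) ->
  order f x = d.
Proof.
move=> d0 Ed Ec Cp.
have [Eo od] := per_order d0 Ed.
have [lt|->//] : order f x < d \/ order f x = d by lia.
set r := d - order f x.
have Er : iter r f x = x.
  have : iter d f x = iter r f (iter (order f x) f x) by rewrite -iterD subnK // ltnW.
  by rewrite Eo Ed.
have [_ or] := per_order (d:=r) (ltac:(rewrite /r; lia)) Er.
move: Ec; rewrite -(subnK (ltnW lt)) addnC trajectD Eo -/r count_cat.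
have -> : traject f x r = traject f x (order f x + (r - order f x)) by rewrite subnKC.
rewrite trajectD count_cat -/(orbit f x); lia.
Qed.

Lemma uniq_map_weak (A : eqType) (B C : eqType) (g : A -> B) (h : A -> C) s :
  {in s &, forall x y, g x = g y -> h x = h y} -> uniq (map h s) -> uniq (map g s).
Proof.
elim: s => //= x s IH H /andP [nx us].
have -> : uniq (map g s).
  by apply: IH => // u v us' vs'; apply: H; rewrite inE ?us' ?vs' orbT.
rewrite andbT.
apply/negP=> /mapP [y ys Ey]; case/negP: nx; apply/mapP; exists y => //.
by apply: H; rewrite ?inE ?eqxx ?ys ?orbT.
Qed.

Lemma map_traject (B : Type) (g : T -> B) x L :
  map g (traject f x L) = map (fun i => g (iter i f x)) (iota 0 L).
Proof.
elim: L x => //= L IH x; congr (_ :: _).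
rewrite IH -[1]addn0 iotaDl -map_comp; apply: eq_map => i /=.
by rewrite add0n -iterS iterSr.
Qed.

End Gen.

Section Tw.
Variables (T : finType) (D : diagram T) (a : T) (m : nat).
Hypothesis m0 : 0 < m.
Local Notation n := m.*2.
Local Notation T' := (T + 'I_n * 'I_4)%type.
Local Notation D' := (twist D a m).
Local Notation sig := (dsig D).
Local Notation alp := (dalp D).
Local Notation s' := (strand D').
Local Notation b := (sig a).

Definition pos (z : T') : option (nat * nat) :=
  if z is inr (j, k) then Some (val j, val k) else None.

Lemma iter_pred (X : Type) (f : X -> X) x k : 0 < k -> iter k f x = f (iter k.-1 f x).
Proof. by case: k. Qed.

Lemma pos_inj z1 z2 : pos z1 = pos z2 -> pos z1 != None -> z1 = z2.
Proof.
case: z1 => [//|[j k]]; case: z2 => [//|[j' k']] //= [E1 E2] _.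
by rewrite (val_inj E1) (val_inj E2).
Qed.

Lemma qv k : k < 4 -> nat_of_ord (q k) = k.
Proof. by move=> h; rewrite /q inordK. Qed.

Lemma S1a z j : pos z = Some (j, 1) -> j.+1 < n -> pos (s' z) = Some (j.+1, 2).
Proof.
case: z => [//|[jj [k kl]]] /= [Ej Ek] lt; subst k.
rewrite /strand /= /tw_next; case: insubP => [u _ vu|]; last by rewrite Ej lt.
by rewrite /pos /tw_sig /= vu Ej qv.
Qed.

Lemma S1b z j : pos z = Some (j, 1) -> j.+1 = n ->
  (alp a == b -> pos (s' z) = Some (j, 0)) /\
  (alp a != b -> s' z = inl (strand D a)).
Proof.
case: z => [//|[jj [k kl]]] /= [Ej Ek] lt; subst k.
rewrite /strand /= /tw_next; case: insubP => [u|]; first by rewrite Ej lt ltnn.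
move=> _; case: eqP => _; split=> // _; by rewrite /pos /tw_sig /= Ej qv.
Qed.

Lemma S2a z j : pos z = Some (j, 2) -> j.+1 < n -> pos (s' z) = Some (j.+1, 1).
Proof.
case: z => [//|[jj [k kl]]] /= [Ej Ek] lt; subst k.
rewrite /strand /= /tw_next; case: insubP => [u _ vu|]; last by rewrite Ej lt.
by rewrite /pos /tw_sig /= vu Ej qv.
Qed.

Lemma S2b z j : pos z = Some (j, 2) -> j.+1 = n ->
  (alp b == a -> pos (s' z) = Some (j, 3)) /\
  (alp b != a -> s' z = inl (strand D b)).
Proof.
case: z => [//|[jj [k kl]]] /= [Ej Ek] lt; subst k.
rewrite /strand /= /tw_next; case: insubP => [u|]; first by rewrite Ej lt ltnn.
move=> _; case: eqP => _; split=> // _; by rewrite /pos /tw_sig /= Ej qv.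
Qed.

Lemma S0a z j : pos z = Some (j, 0) -> 0 < j -> pos (s' z) = Some (j.-1, 3).
Proof.
case: z => [//|[jj [k kl]]] /= [Ej Ek] lt; subst k.
rewrite /strand /= /tw_prev Ej; case: eqP => [E|_]; first by rewrite E in lt.
case: insubP => [u _ vu|]; last by move/negP; case; move: (ltn_ord jj); rewrite Ej; lia.
by rewrite /pos /tw_sig /= vu qv.
Qed.

Lemma S0b z : pos z = Some (0, 0) -> s' z = inl (sig (sig a)).
Proof.
case: z => [//|[jj [k kl]]] /= [Ej Ek]; subst k.
by rewrite /strand /= /tw_prev Ej.
Qed.

Lemma S3a z j : pos z = Some (j, 3) -> 0 < j -> pos (s' z) = Some (j.-1, 0).
Proof.
case: z => [//|[jj [k kl]]] /= [Ej Ek] lt; subst k.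
rewrite /strand /= /tw_prev Ej; case: eqP => [E|_]; first by rewrite E in lt.
case: insubP => [u _ vu|]; last by move/negP; case; move: (ltn_ord jj); rewrite Ej; lia.
by rewrite /pos /tw_sig /= vu qv.
Qed.

Lemma S3b z : pos z = Some (0, 3) -> s' z = inl (sig (sig b)).
Proof.
case: z => [//|[jj [k kl]]] /= [Ej Ek]; subst k.
by rewrite /strand /= /tw_prev Ej.
Qed.

Lemma n0 : 0 < n. Proof. by rewrite double_gt0. Qed.

Lemma La : pos (s' (inl a)) = Some (0, 2).
Proof.
rewrite /strand /= eqxx /tw_first; case: insubP => [u _ vu|]; last by rewrite n0.
by rewrite /pos /tw_sig /= vu qv.
Qed.

Lemma Lb : a != b -> pos (s' (inl b)) = Some (0, 1).
Proof.
move=> ab; rewrite /strand /= eq_sym (negbTE ab) eqxx /tw_first.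
case: insubP => [u _ vu|]; last by rewrite n0.
by rewrite /pos /tw_sig /= vu qv.
Qed.

Lemma Ly y : a != b -> y != a -> y != b ->
  (alp y = a -> pos (s' (inl y)) = Some (n.-1, 3)) /\
  (alp y = b -> pos (s' (inl y)) = Some (n.-1, 0)) /\
  (alp y != a -> alp y != b -> s' (inl y) = inl (strand D y)).
Proof.
move=> ab ya yb; rewrite /strand /= (negbTE ya) (negbTE yb) /tw_last.
case: insubP => [u _ vu|]; last by rewrite prednK ?leqnn // n0.
split; first by move=> ->; rewrite eqxx /pos /tw_sig /= vu qv.
split; first by move=> E; rewrite E eqxx eq_sym (negbTE ab) /pos /tw_sig /= vu qv.
by move=> /negbTE -> /negbTE ->.
Qed.

Lemma oddn1 : odd n.-1.
Proof. by move: n0; case E: n => [//|k] _ /=; move: (odd_double m); rewrite E /= => /negbFE. Qed.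

Lemma nlt : n.-1 < n. Proof. by rewrite ltn_predL n0. Qed.

Lemma UpA i : i < n -> pos (iter i s' (s' (inl a))) = Some (i, if odd i then 1 else 2).
Proof.
elim: i => [|i IH] lt; first by rewrite /= La.
rewrite iterS; have := IH (ltnW lt); case: (boolP (odd i)) => oi P.
  by rewrite (S1a P lt) /= oi.
by rewrite (S2a P lt) /= (negbTE oi).
Qed.

Lemma UpB i : a != b -> i < n -> pos (iter i s' (s' (inl b))) = Some (i, if odd i then 2 else 1).
Proof.
move=> ab; elim: i => [|i IH] lt; first by rewrite /= Lb.
rewrite iterS; have := IH (ltnW lt); case: (boolP (odd i)) => oi P.
  by rewrite (S2a P lt) /= oi.
by rewrite (S1a P lt) /= (negbTE oi).
Qed.

Lemma Dn3 z i : pos z = Some (n.-1, 3) -> i < n ->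
  pos (iter i s' z) = Some (n.-1 - i, if odd i then 0 else 3).
Proof.
move=> P0; elim: i => [|i IH] lt; first by rewrite /= subn0.
rewrite iterS; have := IH (ltnW lt); case: (boolP (odd i)) => oi P.
  by rewrite (S0a P) /= ?oi; [congr (Some (_, _)); lia | lia].
by rewrite (S3a P) /= ?(negbTE oi); [congr (Some (_, _)); lia | lia].
Qed.

Lemma Dn3e z : pos z = Some (n.-1, 3) -> iter n s' z = inl (sig (sig a)).
Proof.
move=> P0; have := Dn3 P0 (i := n.-1); rewrite oddn1 subnn.
move=> /(_ nlt) P; rewrite (iter_pred _ _ n0).
by rewrite (S0b P).
Qed.

Lemma Dn0 z i : pos z = Some (n.-1, 0) -> i < n ->
  pos (iter i s' z) = Some (n.-1 - i, if odd i then 3 else 0).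
Proof.
move=> P0; elim: i => [|i IH] lt; first by rewrite /= subn0.
rewrite iterS; have := IH (ltnW lt); case: (boolP (odd i)) => oi P.
  by rewrite (S3a P) /= ?oi; [congr (Some (_, _)); lia | lia].
by rewrite (S0a P) /= ?(negbTE oi); [congr (Some (_, _)); lia | lia].
Qed.

Lemma Dn0e z : pos z = Some (n.-1, 0) -> iter n s' z = inl (sig (sig b)).
Proof.
move=> P0; have := Dn0 P0 (i := n.-1); rewrite oddn1 subnn.
move=> /(_ nlt) P; rewrite (iter_pred _ _ n0).
by rewrite (S3b P).
Qed.

Lemma UpAe : (alp a == b -> pos (iter n s' (s' (inl a))) = Some (n.-1, 0)) /\
  (alp a != b -> iter n s' (s' (inl a)) = inl (strand D a)).
Proof.
have := UpA (i := n.-1); rewrite oddn1 => /(_ nlt) P.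
rewrite (iter_pred _ _ n0).
exact: (S1b P (prednK n0)).
Qed.

Lemma UpBe : a != b -> (alp b == a -> pos (iter n s' (s' (inl b))) = Some (n.-1, 3)) /\
  (alp b != a -> iter n s' (s' (inl b)) = inl (strand D b)).
Proof.
move=> ab; have := UpB ab (i := n.-1); rewrite oddn1 => /(_ nlt) P.
rewrite (iter_pred _ _ n0).
exact: (S2b P (prednK n0)).
Qed.

Hypothesis sig4 : forall x, iter 4 sig x = x.
Hypothesis sig2 : forall x, sig (sig x) != x.
Hypothesis alpK : forall x, alp (alp x) = x.
Hypothesis alpN : forall x, alp x != x.

Lemma sigK x : sig (sig (sig (sig x))) = x. Proof. exact: sig4. Qed.
Lemma sig_inj : injective sig.
Proof. by apply: (can_inj (g := fun x => sig (sig (sig x)))) => x; rewrite sigK. Qed.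
Lemma sig1 x : sig x != x.
Proof. by apply/negP => /eqP E; move: (sig2 x); rewrite !E eqxx. Qed.
Lemma sig3 x : sig (sig (sig x)) != x.
Proof. by apply/negP => /eqP E; move: (sig1 x); rewrite -{1}E sigK eqxx. Qed.
Lemma sig_eq x y : (sig x == sig y) = (x == y).
Proof. by apply/eqP/eqP => [/sig_inj|->]. Qed.

Lemma strand_inj : injective (strand D).
Proof.
move=> x y; rewrite /strand => /sig_inj /sig_inj E.
by rewrite -(alpK x) E alpK.
Qed.

Lemma ab : a != b. Proof. by rewrite eq_sym sig1. Qed.

Definition st (y : T) : T' :=
  if y == sig (sig a) then (if tw_last m is Some l then inr (l, q 3) else inl y)
  else if y == sig (sig (sig a)) then (if tw_last m is Some l then inr (l, q 0) else inl y)
  else inl y.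

Lemma pos_st2 : pos (st (sig (sig a))) = Some (n.-1, 3).
Proof.
rewrite /st eqxx /tw_last; case: insubP => [u _ vu|]; last by rewrite nlt.
by rewrite /= vu qv.
Qed.

Lemma pos_st3 : pos (st (sig (sig (sig a)))) = Some (n.-1, 0).
Proof.
rewrite /st (negbTE (sig1 _)) eqxx /tw_last; case: insubP => [u _ vu|]; last by rewrite nlt.
by rewrite /= vu qv.
Qed.

Lemma st_else y : y != sig (sig a) -> y != sig (sig (sig a)) -> st y = inl y.
Proof. by rewrite /st => /negbTE -> /negbTE ->. Qed.

Lemma Lst y : y != a -> y != b -> s' (inl y) = st (strand D y).
Proof.
move=> ya yb; have [A [B C]] := Ly ab ya yb.
case: (eqVneq (alp y) a) => [E|na].
  by apply: pos_inj; rewrite A // /strand E pos_st2.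
case: (eqVneq (alp y) b) => [E|nb].
  by apply: pos_inj; rewrite B // /strand E pos_st3.
by rewrite C // st_else // /strand !sig_eq.
Qed.

Definition isl (z : T') : bool := if z is inl _ then true else false.
Definition Rr (z : T') (y : T) :=
  exists i, iter i s' z = inl y /\ all (predC isl) (traject s' z i).

Lemma all_inr z i : (forall j, j < i -> pos (iter j s' z) != None) ->
  all (predC isl) (traject s' z i).
Proof.
move=> H; apply/allP => u /trajectP [j lt ->]; have := H j lt.
by case: (iter j s' z).
Qed.

Lemma K1 w : Rr (s' (inl w)) (strand D w).
Proof.
case: (eqVneq w a) => [->|wa].
  have [A B] := UpAe.
  case: (eqVneq (alp a) b) => [E|nE].
    exists (n + n); rewrite iterD.
    have P := A (introT eqP E).
    rewrite (Dn0e P) /strand E; split=> //.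
    rewrite trajectD all_cat; apply/andP; split; apply: all_inr => j lt.
      by rewrite (UpA lt).
    by rewrite (Dn0 P lt).
  exists n; split; first exact: B.
  by apply: all_inr => j lt; rewrite (UpA lt).
case: (eqVneq w b) => [->|wb].
  have [A B] := UpBe ab.
  case: (eqVneq (alp b) a) => [E|nE].
    exists (n + n); rewrite iterD.
    have P := A (introT eqP E).
    rewrite (Dn3e P) /strand E; split=> //.
    rewrite trajectD all_cat; apply/andP; split; apply: all_inr => j lt.
      by rewrite (UpB ab lt).
    by rewrite (Dn3 P lt).
  exists n; split; first exact: B.
  by apply: all_inr => j lt; rewrite (UpB ab lt).
have [A [B C]] := Ly ab wa wb.
case: (eqVneq (alp w) a) => [E|na].
  have P := A E; exists n; rewrite (Dn3e P) /strand E; split=> //.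
  by apply: all_inr => j lt; rewrite (Dn3 P lt).
case: (eqVneq (alp w) b) => [E|nb].
  have P := B E; exists n; rewrite (Dn0e P) /strand E; split=> //.
  by apply: all_inr => j lt; rewrite (Dn0 P lt).
by exists 0; split => //; exact: C.
Qed.

Lemma vtxS x : vtx D (sig x) = vtx D x.
Proof. by apply/esym/(rootP (fconnect_sym sig_inj)); apply: fconnect1. Qed.

Definition jl (z : T') : nat := if pos z is Some (j, _) then j else 0.

Lemma blk_uniq z len (h : nat -> nat) :
  (forall i, i < len -> jl (iter i s' z) = h i) -> {in iota 0 len &, injective h} ->
  uniq (map jl (traject s' z len)).
Proof.
move=> H hi; rewrite map_traject.
have -> : [seq jl (iter i s' z) | i <- iota 0 len] = map h (iota 0 len).
  by apply/eq_in_map => i; rewrite mem_iota => /andP [_ lt]; apply: H.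
by rewrite map_inj_in_uniq ?iota_uniq.
Qed.

Lemma filt_inr s : all (predC isl) s -> filter isl s = [::] /\ filter (predC isl) s = s.
Proof.
move=> H; split; last exact/all_filterP.
by elim: s H => //= x s IH /andP [hx hs]; rewrite (negbTE hx) IH.
Qed.

Lemma sa_ne1 : sig (sig a) != a. Proof. exact: sig2. Qed.
Lemma sa_ne2 : sig (sig a) != b. Proof. by rewrite sig_eq sig1. Qed.
Lemma sa_ne3 : sig (sig (sig a)) != a. Proof. exact: sig3. Qed.
Lemma sa_ne4 : sig (sig (sig a)) != b. Proof. by rewrite sig_eq sig2. Qed.
Lemma sa_ne5 : sig (sig (sig a)) != sig (sig a). Proof. exact: sig1. Qed.

Definition K2P (y : T) (d : nat) :=
  iter d s' (st y) = st (strand D y) /\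
  filter isl (traject s' (st y) d) = [:: inl y] /\
  (vtx D y != vtx D a -> all isl (traject s' (st y) d)) /\
  uniq (map jl (filter (predC isl) (traject s' (st y) d))).

Lemma K2_down y z (P : forall i, i < n -> jl (iter i s' z) = n.-1 - i) :
  st y = z -> iter n s' z = inl y -> y != a -> y != b -> vtx D y = vtx D a ->
  (forall i, i < n -> pos (iter i s' z) != None) -> K2P y n.+1.
Proof.
move=> Ez En ya yb vy Pn; rewrite /K2P Ez.
have [F1 F2] := filt_inr (all_inr Pn).
rewrite iterS En Lst // trajectSr En filter_rcons /= F1 filter_rcons /= F2.
split=> //; split=> //; split; first by rewrite vy eqxx.
apply: (blk_uniq (h := fun i => n.-1 - i)) => //.
move=> i j; rewrite !mem_iota => Hi Hj; lia.
Qed.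

Lemma K2_up y z (P : forall i, i < n -> jl (iter i s' z) = i) :
  st y = inl y -> s' (inl y) = z -> iter n s' z = st (strand D y) ->
  (forall i, i < n -> pos (iter i s' z) != None) -> vtx D y = vtx D a -> K2P y n.+1.
Proof.
move=> Ez Sz En Pn vy; rewrite /K2P Ez.
have [F1 F2] := filt_inr (all_inr Pn).
rewrite iterSr Sz En trajectS Sz /= F1 F2.
split=> //; split=> //; split; first by rewrite vy eqxx.
apply: (blk_uniq (h := id)) => //.
Qed.

Lemma K2 y : exists d, K2P y d.
Proof.
case: (eqVneq y (sig (sig a))) => [->|y2].
  exists n.+1; apply: (K2_down (z := st (sig (sig a)))) => //;
  first [ by move=> i lt; rewrite /jl (Dn3 pos_st2 lt) | exact: Dn3e pos_st2
        | exact: sa_ne1 | exact: sa_ne2 | by rewrite !vtxS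
        | by move=> i lt; rewrite (Dn3 pos_st2 lt) ].
case: (eqVneq y (sig (sig (sig a)))) => [->|y3].
  exists n.+1; apply: (K2_down (z := st (sig (sig (sig a))))) => //;
  first [ by move=> i lt; rewrite /jl (Dn0 pos_st3 lt) | exact: Dn0e pos_st3
        | exact: sa_ne3 | exact: sa_ne4 | by rewrite !vtxS
        | by move=> i lt; rewrite (Dn0 pos_st3 lt) ].
case: (eqVneq y a) => [->|ya].
  exists n.+1; apply: (K2_up (z := s' (inl a))) => //;
  first [ by move=> i lt; rewrite /jl (UpA lt)
        | by rewrite st_else // eq_sym ?sa_ne1 ?sa_ne3
        | by move=> i lt; rewrite (UpA lt)
        | have [A B] := UpAe; case: (eqVneq (alp a) b) => [E|nE];
          [ by apply: pos_inj; rewrite A ?E ?eqxx // /strand E pos_st3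
          | by rewrite B // st_else // /strand !sig_eq ?alpN ] ].
case: (eqVneq y b) => [->|yb].
  exists n.+1; apply: (K2_up (z := s' (inl b))) => //;
  first [ by move=> i lt; rewrite /jl (UpB ab lt)
        | by rewrite st_else // eq_sym ?sa_ne2 ?sa_ne4
        | by move=> i lt; rewrite (UpB ab lt)
        | by rewrite vtxS
        | have [A B] := UpBe ab; case: (eqVneq (alp b) a) => [E|nE];
          [ by apply: pos_inj; rewrite A ?E ?eqxx // /strand E pos_st2
          | rewrite B // st_else // /strand !sig_eq //;
            by apply/negP => /eqP E; move: (alpN b); rewrite E eqxx ] ].
exists 1; rewrite /K2P st_else //; split; first exact: Lst. by [].
Qed.

Lemma filt_inl s : all isl s -> filter (predC isl) s = [::].
Proof. by elim: s => //= x s IH /andP [hx hs]; rewrite hx IH. Qed.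

Definition isc (x : T) : bool := vtx D x == vtx D a.

Lemma K2L L y : exists d, iter d s' (st y) = st (iter L (strand D) y) /\
  filter isl (traject s' (st y) d) = map inl (traject (strand D) y L) /\
  (count isc (traject (strand D) y L) = 0 -> all isl (traject s' (st y) d)) /\
  (count isc (traject (strand D) y L) <= 1 ->
     uniq (map jl (filter (predC isl) (traject s' (st y) d)))).
Proof.
elim: L y => [|L IH] y; first by exists 0.
have [d1 [E1 [F1 [A1 U1]]]] := K2 y.
have [d2 [E2 [F2 [A2 U2]]]] := IH (strand D y).
exists (d1 + d2); rewrite addnC iterD E1 E2 -iterSr; split=> //.
rewrite addnC trajectD E1 /= filter_cat F1 F2; split=> //.
rewrite all_cat filter_cat map_cat.
split.
  rewrite /= {1}/isc; case: eqP => //= /eqP ne c0.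
  by rewrite A1 // A2.
case: (boolP (isc y)) => cy /=.
  rewrite add1n ltnS leqn0 => /eqP c0.
  by rewrite (filt_inl (A2 c0)) cats0.
rewrite add0n => c1; rewrite (filt_inl (A1 cy)) /=; exact: U2.
Qed.

Lemma fconnP (X : finType) (f : X -> X) x y : fconnect f x y <-> exists i, iter i f x = y.
Proof.
split; last by move=> [i <-]; apply: fconnect_iter.
by rewrite fconnect_orbit => /trajectP [i _ ->]; exists i.
Qed.

Lemma twsig_inj : injective (dsig D').
Proof.
move=> [x|[j k]] [y|[j' k']] //=.
- by move=> [/sig_inj ->].
- move=> E; have E1 : (j, ordS k) = (j', ordS k') := congr1 (fun z : T' => if z is inr p then p else (j, k)) E.
  by move: (f_equal fst E1) (ordS_inj (f_equal snd E1)) => /= -> ->.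
Qed.

Lemma iter_twl i x : iter i (dsig D') (inl x) = inl (iter i sig x).
Proof. by elim: i => //= i ->. Qed.

Lemma iter_twr i j k : iter i (dsig D') (inr (j, k)) = inr (j, iter i (@ordS 4) k).
Proof. by elim: i => //= i ->. Qed.

Lemma VL x y : (vtx D' (inl x) == vtx D' (inl y)) = (vtx D x == vtx D y).
Proof.
rewrite /vtx !root_connect; try exact: fconnect_sym twsig_inj; try exact: fconnect_sym sig_inj.
apply/idP/idP => /fconnP [i E]; apply/fconnP; exists i.
  by move: E; rewrite iter_twl => [[]].
by rewrite iter_twl E.
Qed.

Lemma VR j k j' k' : vtx D' (inr (j, k)) = vtx D' (inr (j', k')) -> j = j'.
Proof.
move/eqP; rewrite /vtx root_connect; last exact: fconnect_sym twsig_inj.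
by move=> /fconnP [i]; rewrite iter_twr => [[]].
Qed.

Lemma VLR x p : vtx D' (inl x) != vtx D' (inr p).
Proof.
rewrite /vtx root_connect; last exact: fconnect_sym twsig_inj.
by apply/negP => /fconnP [i]; rewrite iter_twl.
Qed.


Lemma uniq_split (s : seq T') (ys : seq T) : filter isl s = map inl ys ->
  uniq (map (vtx D) ys) -> uniq (map jl (filter (predC isl) s)) -> uniq (map (vtx D') s).
Proof.
move=> F U1 U2.
rewrite -(perm_uniq (perm_map (vtx D') (permEl (perm_filterC isl s)))) map_cat cat_uniq.
apply/and3P; split.
- rewrite F -map_comp; apply: (uniq_map_weak (h := vtx D)) U1 => x y _ _ /= /eqP.
  by rewrite VL => /eqP.
- apply/hasP => [[u /mapP [z]]]; rewrite mem_filter /= => /andP [nz _] ->.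
  move=> /mapP [w]; rewrite F => /mapP [x _ ->] E.
  by case: z nz E => // p _ E; move: (VLR x p); rewrite E eqxx.
- apply: (uniq_map_weak (h := jl)) U2 => u v.
  rewrite !mem_filter => /andP [nu _] /andP [nv _].
  case: u nu => // [[j k]] _; case: v nv => // [[j' k']] _ /VR ->; by [].
Qed.

Lemma uniq_sub (s : seq T') (ys : seq T) : filter isl s = map inl ys ->
  uniq (map (vtx D') s) -> uniq (map (vtx D) ys).
Proof.
move=> F U; have : uniq (map (vtx D') (filter isl s)).
  exact: subseq_uniq (map_subseq _ (filter_subseq _ _)) U.
rewrite F -map_comp; apply: uniq_map_weak => x y _ _ /eqP.
by rewrite -VL => /eqP.
Qed.

Lemma Rr_inl w y : Rr (inl w) y -> y = w.
Proof. by case=> [[|i]] [E A]; [case: E | move: A; rewrite trajectS]. Qed.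

Lemma Rr_fwd z y : ~~ isl z -> Rr z y -> Rr (s' z) y.
Proof.
move=> nz [[|i] [E A]]; first by move: E nz => /= ->.
by exists i; move: A E; rewrite iterSr /= => /andP [_ ->].
Qed.

Lemma Rr_back z y : ~~ isl z -> Rr (s' z) y -> Rr z y.
Proof. by move=> nz [i [E A]]; exists i.+1; rewrite iterSr /= nz. Qed.

Local Arguments strand : simpl never.

Lemma FL L z y : Rr z y ->
  filter isl (traject s' z L) = map inl (traject (strand D) y (count isl (traject s' z L))).
Proof.
elim: L z y => [//|L IH] z y R.
rewrite trajectS /=; case: z R => [w|p] R.
  by rewrite (Rr_inl R) /= (IH _ _ (K1 w)).
by rewrite (IH _ _ (Rr_fwd _ R)).
Qed.

Definition mu (z : T') : nat :=
  if pos z is Some (j, k) then (if (k == 1) || (k == 2) then n + n - j else j) else 0.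

Lemma step_dec z : ~~ isl z -> isl (s' z) || (mu (s' z) < mu z).
Proof.
case: z => [//|[j [k kl]]] _.
have jn := ltn_ord j.
have vj : \val j = nat_of_ord j := erefl.
case: k kl => [|[|[|[|k]]]] kl //.
- have P : pos (inr (j, Ordinal kl)) = Some (val j, 0) by [].
  case: (posnP (val j)) => [j0|jp].
    by rewrite j0 in P; rewrite (S0b P).
  by rewrite /mu (S0a P jp) P /=; apply/orP; right; move: jn; rewrite -?vj; lia.
- have P : pos (inr (j, Ordinal kl)) = Some (val j, 1) by [].
  case: (ltnP (val j).+1 n) => lt.
    by rewrite /mu (S1a P lt) P /=; apply/orP; right; move: jn; rewrite -?vj; lia.
  have E : (val j).+1 = n by lia.
  have [A B] := S1b P E; case: (eqVneq (alp a) b) => [Eq|nE].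
    by rewrite /mu (A (introT eqP Eq)) P /=; apply/orP; right; move: jn; rewrite -?vj; lia.
  by rewrite (B nE).
- have P : pos (inr (j, Ordinal kl)) = Some (val j, 2) by [].
  case: (ltnP (val j).+1 n) => lt.
    by rewrite /mu (S2a P lt) P /=; apply/orP; right; move: jn; rewrite -?vj; lia.
  have E : (val j).+1 = n by lia.
  have [A B] := S2b P E; case: (eqVneq (alp b) a) => [Eq|nE].
    by rewrite /mu (A (introT eqP Eq)) P /=; apply/orP; right; move: jn; rewrite -?vj; lia.
  by rewrite (B nE).
- have P : pos (inr (j, Ordinal kl)) = Some (val j, 3) by [].
  case: (posnP (val j)) => [j0|jp].
    by rewrite j0 in P; rewrite (S3b P).
  by rewrite /mu (S3a P jp) P /=; apply/orP; right; move: jn; rewrite -?vj; lia.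
Qed.

Lemma reach z : exists y, Rr z y.
Proof.
suff H : forall B z, mu z < B -> exists y, Rr z y by apply: (H (mu z).+1).
elim=> [//|B IH] {}z lt.
case: z lt => [w|p] lt; first by exists w; exists 0.
case E: (s' (inr p)) => [y|q0].
  by exists y; exists 1; rewrite /= E.
have := step_dec (z := inr p) isT; rewrite E /= => dec.
have [y R] := IH (inr q0) (leq_trans dec lt).
by exists y; apply: Rr_back => //; rewrite E.
Qed.

Lemma fconn_K1 w i : fconnect s' (inl w) (inl (iter i (strand D) w)).
Proof.
elim: i => [|i IH]; first exact: connect0.
apply: connect_trans IH _; have [j [E _]] := K1 (iter i (strand D) w).
by rewrite iterS -E -iterSr; apply: fconnect_iter.
Qed.

Lemma cntN z y : Rr z y -> count isl (orbit s' z) = order (strand D) y.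
Proof.
move=> R; have F := FL (order s' z) R; rewrite -/(orbit s' z) in F.
set c := count isl (orbit s' z) in F *.
apply/eqP; rewrite eqn_leq; apply/andP; split.
  have U : uniq (traject (strand D) y c).
    have := filter_uniq isl (orbit_uniq s' z); rewrite F.
    by rewrite map_inj_uniq //; move=> u v [].
  rewrite -[X in X <= _](size_traject (strand D) y c) -size_orbit.
  apply: uniq_leq_size U _ => u /trajectP [i _ ->].
  by rewrite -fconnect_orbit fconnect_iter.
rewrite -size_orbit -[X in _ <= X](size_traject (strand D) y c).
apply: uniq_leq_size (orbit_uniq _ _) _ => u /trajectP [i _ ->].
have : inl (iter i (strand D) y) \in filter isl (orbit s' z).
  rewrite mem_filter /= -fconnect_orbit.
  have [j [E _]] := R; apply: connect_trans (fconn_K1 y i).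
  by rewrite -E fconnect_iter.
have inj : injective (@inl T ('I_n * 'I_4)) by move=> ? ? [].
by rewrite F (mem_map inj).
Qed.

Lemma cnt_le1 ys : uniq (map (vtx D) ys) -> count isc ys <= 1.
Proof.
move=> U; have -> : count isc ys = count_mem (vtx D a) (map (vtx D) ys) by rewrite count_map.
by rewrite count_uniq_mem //; case: (_ \in _).
Qed.

Lemma inl_inj : injective (@inl T ('I_n * 'I_4)). Proof. by move=> ? ? []. Qed.

Lemma DtoD' : straight D -> straight D'.
Proof.
case=> x0 [k /= [kN U1 U2]].
set N := order (strand D) x0 in kN U2 *.
have N0 : 0 < N by apply: order_gt0.
have [d1 [E1 [F1 [_ C1]]]] := K2L k x0.
have [d2 [E2 [F2 [_ C2]]]] := K2L (N - k) (iter k (strand D) x0).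
set x' := st x0.
have Et : iter (d1 + d2) s' x' = x'.
  by rewrite addnC iterD E1 E2 -iterD subnK // iter_order //; exact: strand_inj.
have Ftot : filter isl (traject s' x' (d1 + d2)) = map inl (traject (strand D) x0 N).
  by rewrite trajectD filter_cat F1 E1 F2 -map_cat -trajectD subnKC.
have cnt : count isl (traject s' x' (d1 + d2)) = N.
  by rewrite -size_filter Ftot size_map size_traject.
have d0 : 0 < d1 + d2.
  by case: (d1 + d2) cnt => [|//] /= E; rewrite -E in N0.
have [y R] := reach x'.
have Fy := FL (d1 + d2) R; rewrite Ftot cnt in Fy.
have ey : y = x0.
  move: Fy => /(inj_map inl_inj); case: (N) N0 => [//|N'] _ /=; by case.
rewrite ey in R.
have Eo : order s' x' = d1 + d2.
  apply: (order_count (P := isl)) => //; rewrite (cntN R) -/N //.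
exists x', d1; rewrite /= Eo; split.
- exact: leq_addr.
- by apply: (uniq_split F1) => //; apply: C1; apply: cnt_le1.
- by rewrite addKn E1; apply: (uniq_split F2) => //; apply: C2; apply: cnt_le1.
Qed.

Lemma D'toD : straight D' -> straight D.
Proof.
case=> x' [k' /= [kn U1 U2]].
set n' := order s' x' in kn U2 *.
have [y R] := reach x'.
set N := order (strand D) y.
have Fo := FL n' R; rewrite -/(orbit s' x') (cntN R) -/N in Fo.
have F1 := FL k' R; set c1 := count isl (traject s' x' k') in F1.
have Eo : orbit s' x' = traject s' x' k' ++ traject s' (iter k' s' x') (n' - k').
  by rewrite -trajectD subnKC.
have c1N : c1 <= N.
  by rewrite /N -(cntN R) Eo count_cat /c1 leq_addr.
have F2 : filter isl (traject s' (iter k' s' x') (n' - k')) =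
          map inl (traject (strand D) (iter c1 (strand D) y) (N - c1)).
  move: Fo; rewrite Eo filter_cat F1 -(subnKC c1N) trajectD map_cat subnKC // => E.
  have := congr1 (fun t : seq T' => drop (size (traject (strand D) y c1)) t) E.
  by rewrite /= !drop_size_cat ?size_map.
exists y, c1; rewrite /= -/N; split=> //.
- exact: uniq_sub F1 U1.
- exact: uniq_sub F2 U2.
Qed.

End Tw.

Theorem lemma4p3 (T : finType) (D : diagram T) (a : T) (m : nat) :
  knot_diagram D ->
  (0 < m)%N ->
  twist_axis D a ->
  no_new_R2 (twist D a m) ->
  straight D <-> straight (twist D a m).
Proof.
move=> [s4 [s2 [aK [aN _]]]] m0 _ _.
split.
  by apply: DtoD'.
by apply: D'toD.
Qed.
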